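(* For constants $a\in\mathbb{R}$ and $b>0$, define $P_3:\mathbb{R}^m\to\mathbb{R}$ by $P_3(x)=\sqrt{(\|x\|^2+a)^2+b}$. Then $P_3$ is twice differentiable with locally Lipschitz second derivatives and is $L$-curvature bounded for some constant $L$ depending only on $a$ and $b$.
   Context: A function $\phi$ is $L$-curvature bounded if $\phi(x)+\frac L2\|x\|^2$ is convex and $\|\nabla\phi(x)-\nabla\phi(x')\|\le L\|x-x'\|$ for all $x,x'$. *)

(* Defs.v *)
(* R^m is modelled as row vectors 'rV[R]_m. *)
From HB Require Import structures.
From mathcomp Require Import all_boot all_order all_algebra.
From mathcomp Require Import all_classical all_reals all_analysis.
Set Implicit Arguments. Unset Strict Implicit. Unset Printing Implicit Defensive.
Import Order.TTheory GRing.Theory Num.Theory.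
Import numFieldNormedType.Exports.
Local Open Scope ring_scope.

Section Defs.
Variable R : realType.

Definition dotv (m : nat) (u v : 'rV[R]_m) : R := \sum_(i < m) u 0 i * v 0 i.
Definition enorm (m : nat) (x : 'rV[R]_m) : R := Num.sqrt (dotv x x).

Definition fnorm (m : nat) (M : 'M[R]_m) : R :=
  Num.sqrt (\sum_(i < m) \sum_(j < m) M i j ^+ 2).

Definition P3 (a b : R) (m : nat) (x : 'rV[R]_m) : R :=
  Num.sqrt ((enorm x ^+ 2 + a) ^+ 2 + b).

(* Gradient: the vector of partial derivatives (meaningful where phi is differentiable). *)
Definition grad (m : nat) (phi : 'rV[R]_m -> R) (x : 'rV[R]_m) : 'rV[R]_m :=
  \row_(i < m) ('d phi x (delta_mx 0 i : 'rV[R]_m)).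

Definition hessian (m : nat) (phi : 'rV[R]_m -> R) (x : 'rV[R]_m) : 'M[R]_m :=
  \matrix_(i < m, j < m) ('d (grad phi) x (delta_mx 0 i : 'rV[R]_m)) 0 j.

Definition convexf (m : nat) (f : 'rV[R]_m -> R) : Prop :=
  forall (x y : 'rV[R]_m) (t : R), 0 <= t <= 1 ->
    f (t *: x + (1 - t) *: y) <= t * f x + (1 - t) * f y.

Definition twice_differentiable (m : nat) (phi : 'rV[R]_m -> R) : Prop :=
  (forall x, differentiable phi x) /\ (forall x, differentiable (grad phi) x).

Definition hessian_locally_lipschitz (m : nat) (phi : 'rV[R]_m -> R) : Prop :=
  forall x0 : 'rV[R]_m, exists r : R, exists K : R, 0 < r /\
    forall x y : 'rV[R]_m, enorm (x - x0) < r -> enorm (y - x0) < r ->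
      fnorm (hessian phi x - hessian phi y) <= K * enorm (x - y).

(* phi is L-curvature bounded: phi + L/2 ||x||^2 convex, and grad phi is
   L-Lipschitz (phi being differentiable everywhere so that grad phi makes sense). *)
Definition curvature_bounded (L : R) (m : nat) (phi : 'rV[R]_m -> R) : Prop :=
  convexf (fun x => phi x + L / 2 * enorm x ^+ 2) /\
  (forall x, differentiable phi x) /\
  (forall x x' : 'rV[R]_m, enorm (grad phi x - grad phi x') <= L * enorm (x - x')).

End Defs.

(* Main.v *)
Require Import Defs.
From HB Require Import structures.
From mathcomp Require Import all_boot all_order all_algebra.
From mathcomp Require Import all_classical all_reals all_analysis.
From mathcomp Require Import ring lra.
Import Order.TTheory GRing.Theory Num.Theory.
Import numFieldNormedType.Exports.
Local Open Scope ring_scope.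
Section Dot.
Variables (R : realType) (m : nat).
Implicit Types (x y u v : 'rV[R]_m).

Lemma dot_comb (A B C D : R) x y :
  dotv (A *: x + B *: y) (C *: x + D *: y) =
  A * C * dotv x x + (A * D + B * C) * dotv x y + B * D * dotv y y.
Proof.
rewrite /dotv !mulr_sumr -!big_split /=; apply: eq_bigr => i _.
by rewrite !mxE; ring.
Qed.

Lemma dotvC x y : dotv x y = dotv y x.
Proof. by rewrite /dotv; apply: eq_bigr => i _; rewrite mulrC. Qed.

Lemma dotv_ge0 x : 0 <= dotv x x.
Proof. by rewrite /dotv sumr_ge0 // => i _; rewrite -expr2 sqr_ge0. Qed.

Lemma enorm_ge0 x : 0 <= enorm x.
Proof. exact: sqrtr_ge0. Qed.

Lemma enorm2 x : enorm x ^+ 2 = dotv x x.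
Proof. by rewrite sqr_sqrtr // dotv_ge0. Qed.

Lemma dotv0 x : dotv x x = 0 -> forall y, dotv y x = 0.
Proof.
move=> h y; have h0 : forall i, x 0 i = 0.
  move=> i; have H := psumr_eq0P _ h.
  apply/eqP; rewrite -sqrf_eq0 expr2; apply/eqP; apply: H => //.
  by move=> j _; rewrite -expr2 sqr_ge0.
by rewrite /dotv big1 // => i _; rewrite h0 mulr0.
Qed.

Lemma CS2 x y : dotv x y ^+ 2 <= dotv x x * dotv y y.
Proof.
have [yy0|yy0] := eqVneq (dotv y y) 0.
  by rewrite (dotv0 _ yy0) yy0 expr0n mulr0.
have hy : 0 < dotv y y by rewrite lt0r yy0 dotv_ge0.
have := dotv_ge0 (dotv y y *: x + (- dotv x y) *: y).
rewrite dot_comb => h.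
have : 0 <= dotv y y * (dotv x x * dotv y y - dotv x y ^+ 2).
  by move: h; set e := (X in 0 <= X) => h; have <- : e = dotv y y * (dotv x x * dotv y y - dotv x y ^+ 2) by rewrite /e; ring.
by rewrite pmulr_rge0 // subr_ge0.
Qed.

Lemma CS x y : `|dotv x y| <= enorm x * enorm y.
Proof.
rewrite -sqrtr_sqr /enorm -sqrtrM ?dotv_ge0 //.
by rewrite ler_sqrt ?mulr_ge0 ?dotv_ge0 // CS2.
Qed.


Lemma coord_le x (i : 'I_m) : `|x 0 i| <= enorm x.
Proof.
rewrite -sqrtr_sqr /enorm ler_sqrt ?dotv_ge0 // /dotv (bigD1 i) //= -expr2 lerDl.
by rewrite sumr_ge0 // => j _; rewrite -expr2 sqr_ge0.
Qed.

Lemma dotv_delta x (i : 'I_m) : dotv x (delta_mx 0 i) = x 0 i.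
Proof.
rewrite /dotv (bigD1 i) //= big1 ?addr0; first by rewrite mxE !eqxx mulr1.
by move=> j ji; rewrite mxE eqxx (negbTE ji) mulr0.
Qed.

Lemma enorm_tri x y : enorm (x + y) <= enorm x + enorm y.
Proof.
have -> : x + y = 1 *: x + 1 *: y by rewrite !scale1r.
rewrite /enorm.
rewrite -[X in _ <= X]ger0_norm ?addr_ge0 ?sqrtr_ge0 // -sqrtr_sqr ler_sqrt ?sqr_ge0 //.
rewrite dot_comb sqrrD !sqr_sqrtr ?dotv_ge0 //.
have := ler_norm (dotv x y); have := CS x y; rewrite /enorm; lra.
Qed.

End Dot.
Arguments dot_comb {R m}.
Arguments dotvC {R m}.
Arguments dotv_ge0 {R m}.
Arguments enorm_ge0 {R m}.
Arguments enorm2 {R m}.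
Arguments dotv0 {R m}.
Arguments CS2 {R m}.
Arguments CS {R m}.
Arguments coord_le {R m}.
Arguments dotv_delta {R m}.
Arguments enorm_tri {R m}.

Lemma is_diff_sumf (R : realType) (V W : normedModType R) n (f df : 'I_n -> V -> W) x :
  (forall i, is_diff x (f i) (df i)) -> is_diff x (\sum_i f i) (\sum_i df i).
Proof.
move=> h; elim/big_ind2: _ => //.
- exact: is_diff_cst.
- by move=> ? ? ? ? h1 h2; exact: is_diffD.
Qed.

Lemma is_diff_coord (R : realType) m (x : 'rV[R]_m) i :
  is_diff x (fun y : 'rV[R]_m => y 0 i) (fun y => y 0 i).
Proof.
have @f : {linear 'rV[R]_m -> R}.
  by exists (fun N : 'rV[R]_m => N 0 i); do 2![eexists]; do ?[constructor];
     rewrite ?mxE// => ? *; rewrite ?mxE//; move=> ?; rewrite !mxE.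
rewrite (_ : (fun _ => _) = f) //; apply: DiffDef.
  exact/linear_differentiable/coord_continuous.
by rewrite diff_lin //; exact: coord_continuous.
Qed.

Lemma is_diff_of_derive (R : realType) (f : R -> R) (t df : R) :
  is_derive t 1 f df -> is_diff t f ( *:%R^~ df).
Proof.
move=> h; have d : differentiable f t by apply/derivable1_diffP; case: h.
apply: DiffDef => //; rewrite diff1E //.
by rewrite derive1E derive_val.
Qed.
Arguments is_diff_sumf {R V W n f df x}.
Arguments is_diff_coord {R m}.
Arguments is_diff_of_derive {R f t df}.

Lemma sqnorm (R : realType) (x : R) : `|x| ^+ 2 = x ^+ 2.
Proof. exact: real_normK (num_real x). Qed.

Lemma key_ineq (R : realType) (L A B ex ey p : R) : 0 <= ex -> 0 <= ey ->
  `|p| <= ex * ey -> `|A| <= L -> `|B| <= L -> `|A * ex - B * ey| <= L * `|ex - ey| ->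
  A * A * ex ^+ 2 + (A * - B + - B * A) * p + - B * - B * ey ^+ 2
    <= L ^+ 2 * (1 * 1 * ex ^+ 2 + (1 * -1 + -1 * 1) * p + -1 * -1 * ey ^+ 2).
Proof.
move=> hx hy hp hA hB hAB.
have hL : 0 <= L by apply: le_trans hA.
have E1 : (A * ex - B * ey) ^+ 2 <= L ^+ 2 * (ex - ey) ^+ 2.
  rewrite -exprMn -[X in X <= _]sqnorm -[X in _ <= X]sqnorm.
  rewrite lerXn2r ?nnegrE //; apply: le_trans hAB _.
  by rewrite normrM (ger0_norm hL).
have E2 : (A * ex + B * ey) ^+ 2 <= L ^+ 2 * (ex + ey) ^+ 2.
  rewrite -exprMn -[X in X <= _]sqnorm -[X in _ <= X]sqnorm.
  rewrite lerXn2r ?nnegrE //; apply: (le_trans (ler_normD _ _)).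
  rewrite [X in _ <= X]normrM (ger0_norm hL) (ger0_norm (addr_ge0 hx hy)) !normrM (ger0_norm hx) (ger0_norm hy).
  by rewrite mulrDr lerD // ler_wpM2r.
set D := (X in X <= _); set K := (X in _ <= X).
rewrite -subr_ge0.
have [e0|epos] := eqVneq (ex * ey) 0.
  have p0 : p = 0 by apply/normr0_eq0/eqP; rewrite eq_le normr_ge0 andbT -e0.
  have hA2 : A ^+ 2 <= L ^+ 2 by rewrite -sqnorm lerXn2r ?nnegrE.
  have hB2 : B ^+ 2 <= L ^+ 2 by rewrite -sqnorm lerXn2r ?nnegrE.
  rewrite /D /K p0.
  have := sqr_ge0 ex; have := sqr_ge0 ey.
  nra.
have hpos : 0 < ex * ey by rewrite lt0r epos mulr_ge0.
have hp1 : 0 <= ex * ey - p by rewrite subr_ge0; exact: le_trans (ler_norm _) hp.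
have hp2 : 0 <= ex * ey + p.
  rewrite -[p]opprK subr_ge0; apply: le_trans hp; rewrite -normrN; exact: ler_norm.
have idt : 2 * (ex * ey) * (K - D) =
   (ex * ey - p) * (L ^+ 2 * (ex + ey) ^+ 2 - (A * ex + B * ey) ^+ 2) +
   (ex * ey + p) * (L ^+ 2 * (ex - ey) ^+ 2 - (A * ex - B * ey) ^+ 2).
  by rewrite /K /D; ring.
have : 0 <= 2 * (ex * ey) * (K - D).
  by rewrite idt addr_ge0 // mulr_ge0 // subr_ge0.
by rewrite pmulr_rge0 // mulr_gt0.
Qed.
Lemma lip_of_deriv (R : realType) (f df : R -> R) (M : R) :
  (forall x : R, is_derive x 1 f (df x)) -> (forall x, `|df x| <= M) ->
  forall x y, `|f x - f y| <= M * `|x - y|.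
Proof.
move=> fd dfM.
have key : forall x y, x <= y -> `|f x - f y| <= M * `|x - y|.
  move=> x y xy; rewrite distrC.
  have [c _ ->] : exists2 c, c \in `[x, y]%R & f y - f x = df c * (y - x).
    apply: (MVT_segment xy (fun z _ => fd z)).
    apply/continuous_subspaceT => z.
    apply/differentiable_continuous/derivable1_diffP.
    by case: (fd z).
  rewrite normrM distrC; apply: ler_wpM2r => //.
move=> x y; have [xy|yx] := leP x y; first exact: key.
by rewrite distrC [`|x - y|]distrC; apply: key; apply: ltW.
Qed.

Lemma scaleRE (R : realType) (x y : R) : x *: y = x * y.
Proof. by []. Qed.

Lemma div_le (R : realType) (u v x y : R) : 0 < x -> 0 < y -> u * y <= v * x -> u / x <= v / y.
Proof. by move=> hx hy h; rewrite ler_pdivrMr // mulrAC ler_pdivlMr. Qed.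

Section OneD.
Variables (R : realType) (a b : R).
Hypothesis hb : 0 < b.

Definition q (t : R) := (t + a) ^+ 2 + b.
Definition S (t : R) := Num.sqrt (q t).
Definition d1 (t : R) := (t + a) / S t.
Definition d2 (t : R) := b / (q t * S t).

Lemma q_gt0 t : 0 < q t.
Proof. rewrite /q; have := sqr_ge0 (t + a); have := hb; lra. Qed.

Lemma S_gt0 t : 0 < S t.
Proof. by rewrite sqrtr_gt0 q_gt0. Qed.

Lemma SS t : S t ^+ 2 = q t.
Proof. by rewrite sqr_sqrtr // ltW // q_gt0. Qed.

Lemma der_q (t : R) : is_derive t 1 q (2 * (t + a)).
Proof.
have -> : q = (id + cst a) ^+ 2 + cst b by apply/funext => u.
apply: is_derive_eq.
by rewrite /= !addr0 expr1 [_ *: _]mulr1.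
Qed.

Lemma der_S (t : R) : is_derive t 1 S (d1 t).
Proof.
have := is_derive1_comp (is_derive1_sqrt (q_gt0 t)) (der_q t).
rewrite (_ : Num.sqrt \o q = S) //; move/is_derive_eq; apply.
rewrite /d1 -/(S t); have := S_gt0 t => h.
by field; rewrite gt_eqF.
Qed.

Lemma bE t : b = S t ^+ 2 - (t + a) ^+ 2.
Proof. by rewrite SS /q; ring. Qed.

Lemma der_d1 (t : R) : is_derive t 1 d1 (d2 t).
Proof.
have e : d1 = (fun u => u + a) * (fun u => (S u)^-1) by apply/funext.
have h1 : is_derive t 1 (fun u => u + a) 1.
  have := is_deriveD (is_derive_id t 1) (is_derive_cst a t 1).
  by rewrite addr0.
have h2 := is_deriveV (lt0r_neq0 (S_gt0 t)) (der_S t).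
have h3 := is_deriveM h1 h2.
have h4 : is_derive t 1 d1 ((t + a) *: (- S t ^- 2 *: d1 t) + (S t)^-1%:A) by rewrite e; exact: h3.
suff -> : d2 t = ((t + a) *: (- S t ^- 2 *: d1 t) + (S t)^-1%:A) by exact: h4.
rewrite /d2 /d1 -SS {1}(bE t) /=; have := S_gt0 t => h.
rewrite [_%:A]mulr1 !scaleRE.
by field; rewrite gt_eqF.
Qed.


Definition d3 (t : R) := - (3 * b * (t + a)) / S t ^+ 5.

Lemma d2E t : d2 t = b / S t ^+ 3.
Proof. by rewrite /d2 -SS -exprSr. Qed.

Lemma der_d2 (t : R) : is_derive t 1 d2 (d3 t).
Proof.
have h1 := is_deriveX 3 (der_S t).
have h2 := is_deriveV (f := S ^+ 3) (expf_neq0 3 (lt0r_neq0 (S_gt0 t))) h1.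
have h3 := is_deriveM (is_derive_cst b t 1) h2.
have e : d2 = cst b * (fun y => ((S ^+ 3) y)^-1).
  by apply/funext => y; rewrite d2E.
have h4 : is_derive t 1 d2 (cst b t *: (- (S ^+ 3) t ^- 2 *: ((3%:R * S t ^+ 3.-1) *: d1 t)) +
            ((S ^+ 3) t)^-1 *: 0) by rewrite e; exact: h3.
suff -> : d3 t = (cst b t *: (- (S ^+ 3) t ^- 2 *: ((3%:R * S t ^+ 3.-1) *: d1 t)) +
            ((S ^+ 3) t)^-1 *: 0) by exact: h4.
rewrite /d3 /d1 /= !scaleRE; have := S_gt0 t => h.
rewrite !fctE.
by field; rewrite gt_eqF.
Qed.

Definition beta := Num.sqrt b.

Lemma beta_gt0 : 0 < beta.
Proof. by rewrite sqrtr_gt0. Qed.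

Lemma beta2 : beta ^+ 2 = b.
Proof. by rewrite sqr_sqrtr // ltW. Qed.

Lemma S_ge_beta t : beta <= S t.
Proof. rewrite ler_sqrt; last exact/ltW/q_gt0. rewrite /q; have := sqr_ge0 (t + a); lra. Qed.

Lemma abs_le_S t : `|t + a| <= S t.
Proof. rewrite -sqrtr_sqr ler_sqrt; last exact/ltW/q_gt0. rewrite /q; have := hb; lra. Qed.

Lemma d1_bound t : `|d1 t| <= 1.
Proof.
rewrite /d1 normrM normfV (gtr0_norm (S_gt0 t)) ler_pdivrMr ?S_gt0 // mul1r.
exact: abs_le_S.
Qed.

Lemma d2_ge0 t : 0 <= d2 t.
Proof. by rewrite d2E divr_ge0 ?ltW ?exprn_gt0 ?S_gt0. Qed.

Lemma d2_bound t : d2 t <= beta^-1.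
Proof.
rewrite d2E -[beta^-1]div1r; apply: div_le; [exact: exprn_gt0 (S_gt0 t)|exact: beta_gt0|].
have h := S_ge_beta t; have hB := beta_gt0.
rewrite mul1r -beta2 -exprSr.
by apply: lerXn2r => //; rewrite nnegrE ltW // (lt_le_trans hB h).
Qed.

Lemma Sd2_le1 t : S t * d2 t <= 1.
Proof.
rewrite d2E; have := S_gt0 t => h.
rewrite [X in X <= _](_ : _ = b / S t ^+ 2); last by field; rewrite gt_eqF.
rewrite ler_pdivrMr ?exprn_gt0 // mul1r SS /q; have := sqr_ge0 (t + a); lra.
Qed.

Lemma d3_bound t : `|d3 t| <= 3 / b.
Proof.
rewrite /d3 mulNr normrN normrM normfV !normrM (gtr0_norm (S_gt0 t)).
rewrite (ger0_norm (ltW hb)) normr_nat.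
have hS := S_gt0 t; have hu := abs_le_S t.
have hbS : b <= S t ^+ 2 by rewrite SS /q; have := sqr_ge0 (t + a); lra.
apply: div_le => //; first by rewrite !mulr_gt0.
have h1 : b * b <= S t ^+ 2 * S t ^+ 2 := ler_pM (ltW hb) (ltW hb) hbS hbS.
have h2 : b * b * `|t + a| <= S t ^+ 2 * S t ^+ 2 * S t.
  by apply: ler_pM => //; rewrite mulr_ge0 // ltW.
rewrite (_ : 3 * b * `|t + a| * b = 3 * (b * b * `|t + a|)); last by ring.
rewrite [X in _ <= X](_ : _ = 3 * (S t ^+ 2 * S t ^+ 2 * S t)); last by ring.
by rewrite ler_wpM2l.
Qed.



Lemma t_d2 (t : R) : 0 <= t -> t * d2 t <= 1 + `|a| / beta.
Proof.
move=> t0.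
have ht : t <= S t + `|a|.
  have := abs_le_S t; have := ler_norm (t + a); have := ler_normr a.
  have := ler_norm (- a); rewrite normrN; lra.
have h2 := d2_ge0 t.
apply: (le_trans (ler_wpM2r h2 ht)); rewrite mulrDl.
apply: lerD; first exact: Sd2_le1.
by rewrite ler_wpM2l // d2_bound.
Qed.

Definition rho (r : R) := 2 * r * d1 (r ^+ 2).
Definition drho (r : R) := 2 * d1 (r ^+ 2) + 4 * (r ^+ 2 * d2 (r ^+ 2)).
Definition Lg := 6 + 4 * (`|a| / beta).

Lemma der_rho (r : R) : is_derive r 1 rho (drho r).
Proof.
have hsq : is_derive r 1 (id ^+ 2) ((2%:R * id r ^+ 1) *: 1) := is_deriveX 2 (is_derive_id r 1).
have hc := @is_derive1_comp _ d1 (id ^+ 2) r _ _ (der_d1 (r ^+ 2)) hsq.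
have hl : is_derive r 1 (fun x : R => 2 * x) (2 *: 1).
  exact: is_deriveZ (is_derive_id r 1).
have h3 := is_deriveM hl hc.
have e : rho = (fun x : R => 2 * x) * (d1 \o id ^+ 2) by apply/funext.
have h4 : is_derive r 1 rho ((2 * r) *: (d2 (r ^+ 2) * ((2%:R * id r ^+ 1) *: 1)) +
   (d1 \o id ^+ 2) r *: (2 *: 1)) by rewrite e; exact: h3.
suff -> : drho r = (2 * r) *: (d2 (r ^+ 2) * ((2%:R * id r ^+ 1) *: 1)) +
   (d1 \o id ^+ 2) r *: (2 *: 1) by exact: h4.
rewrite /drho /= !scaleRE /=; ring.
Qed.

Lemma drho_bound r : `|drho r| <= Lg.
Proof.
rewrite /drho /Lg.
have h1 := d1_bound (r ^+ 2).
have h2 := @t_d2 (r ^+ 2) (sqr_ge0 r).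
have h3 : 0 <= r ^+ 2 * d2 (r ^+ 2) by rewrite mulr_ge0 ?sqr_ge0 ?d2_ge0.
have h4 := ler_norm (d1 (r ^+ 2)); have h5 := ler_normr (d1 (r ^+ 2)).
rewrite ler_norml; apply/andP; split.
  have h6 := ler_norm (- d1 (r ^+ 2)); rewrite normrN in h6.
  have : 0 <= `|a| / beta by rewrite divr_ge0 // ltW // beta_gt0.
  lra.
have : 0 <= `|a| / beta by rewrite divr_ge0 // ltW // beta_gt0.
lra.
Qed.

Lemma rho_lip x y : `|rho x - rho y| <= Lg * `|x - y|.
Proof. apply: (@lip_of_deriv R rho drho) => [t|t]; [exact: der_rho|exact: drho_bound]. Qed.

Lemma Lg_ge2 : 2 <= Lg.
Proof. rewrite /Lg; have : 0 <= `|a| / beta by rewrite divr_ge0 // ltW // beta_gt0. lra. Qed.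

Definition c1 := beta^-1.
Lemma d1_lip x y : `|d1 x - d1 y| <= c1 * `|x - y|.
Proof.
apply: (@lip_of_deriv R d1 d2) => t; first exact: der_d1.
by rewrite ger0_norm ?d2_ge0 // d2_bound.
Qed.

Lemma d2_lip x y : `|d2 x - d2 y| <= 3 / b * `|x - y|.
Proof. apply: (@lip_of_deriv R d2 d3) => [t|t]; [exact: der_d2|exact: d3_bound]. Qed.


Variable m : nat.
Local Notation V := 'rV[R]_m.

Definition sqf (x : V) := dotv x x.
Definition kf (x : V) := 2 * d1 (sqf x).
Definition G (x : V) := kf x *: x.

Lemma P3E : P3 a b (m:=m) = S \o sqf.
Proof. by apply/funext => x; rewrite /P3 /S /q /= enorm2. Qed.

Lemma sqf_diff (x : V) : is_diff x sqf (fun v => 2 * dotv x v).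
Proof.
have e : sqf = \sum_(i < m) ((fun y : V => y 0 i) * (fun y : V => y 0 i)).
  by apply/funext => y; rewrite /sqf /dotv fct_sumE.
have h := is_diff_sumf (fun i => is_diffM (is_diff_coord x i) (is_diff_coord x i)).
rewrite e; apply: is_diff_eq h _.
apply/funext => v; rewrite fct_sumE /dotv mulr_sumr; apply: eq_bigr => i _.
rewrite /= !fctE /= !scaleRE; ring.
Qed.

Lemma P3_diff (x : V) : is_diff x (P3 a b (m:=m)) (fun v => (2 * dotv x v) * d1 (sqf x)).
Proof.
rewrite P3E; have := is_diff_comp (sqf_diff x) (is_diff_of_derive (der_S (sqf x))).
by move/is_diff_eq; apply; apply/funext => v.
Qed.

Lemma grad_P3 : grad (P3 a b (m:=m)) = G.
Proof.
apply/funext => x; apply/rowP => i; rewrite /grad /G !mxE.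
case: (P3_diff x) => _ ->.
rewrite dotv_delta /kf; ring.
Qed.

Lemma der_2d1 (t : R) : is_derive t 1 (2 *: d1) (2 *: d2 t).
Proof. exact: is_deriveZ (der_d1 t). Qed.

Lemma kf_diff (x : V) : is_diff x kf (fun v => (2 * dotv x v) * (2 * d2 (sqf x))).
Proof.
have h := is_diff_comp (sqf_diff x) (is_diff_of_derive (der_2d1 (sqf x))).
have e : kf = (2 *: d1) \o sqf by apply/funext.
by rewrite e; move/is_diff_eq: h; apply; apply/funext => v.
Qed.

Lemma is_diff_scl (k dk : V -> R) (w : V) (x : V) :
  is_diff x k dk -> is_diff x (fun z => k z *: w) (fun v => dk v *: w).
Proof.
move=> [hd hv]; apply: DiffDef; first exact: differentiableZl.
by rewrite diffZl // hv.
Qed.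
Arguments is_diff_scl {k dk} w {x}.

Definition dG (x v : V) := ((2 * dotv x v) * (2 * d2 (sqf x))) *: x + kf x *: v.

Lemma G_diff (x : V) : is_diff x G (dG x).
Proof.
have e : G = \sum_(i < m) (fun z : V => (kf z * z 0 i) *: (delta_mx 0 i : V)).
  apply/funext => z; rewrite fct_sumE; apply/rowP => j.
  rewrite /G summxE mxE (bigD1 j) //= big1 ?addr0.
    by rewrite !mxE !eqxx mulr1.
  by move=> i ij; rewrite !mxE eqxx eq_sym (negbTE ij) mulr0.
have h := is_diff_sumf (fun i => is_diff_scl (delta_mx 0 i : V) (is_diffM (kf_diff x) (is_diff_coord x i))).
rewrite e; move/is_diff_eq: h; apply; apply/funext => v.
rewrite fct_sumE; apply/rowP => j; rewrite summxE (bigD1 j) //= big1 ?addr0.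
  by rewrite /dG !mxE !eqxx /= !fctE /= mulr1 /GRing.scale /=; ring.
by move=> i ij; rewrite !mxE eqxx eq_sym (negbTE ij) mulr0.
Qed.

Lemma hess_E (x : V) i j :
  hessian (P3 a b (m:=m)) x i j = kf x * (i == j)%:R + 4 * d2 (sqf x) * (x 0 i * x 0 j).
Proof.
rewrite /hessian mxE grad_P3; case: (G_diff x) => _ ->.
by rewrite /dG !mxE dotv_delta eqxx /= (eq_sym j i); ring.
Qed.

Lemma kf_bound (x : V) : `|kf x| <= Lg.
Proof.
apply: le_trans Lg_ge2; rewrite /kf normrM ger0_norm // -[X in _ <= X]mulr1.
by rewrite ler_wpM2l // d1_bound.
Qed.

Lemma kf_rho (x : V) : kf x * enorm x = rho (enorm x).
Proof. by rewrite /rho /kf /sqf enorm2; ring. Qed.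

Lemma G_lip (x y : V) : enorm (G x - G y) <= Lg * enorm (x - y).
Proof.
have e1 : G x - G y = kf x *: x + (- kf y) *: y by rewrite /G scaleNr.
have e2 : x - y = 1 *: x + (-1) *: y by rewrite scale1r scaleN1r.
have hL : 0 <= Lg by apply: le_trans Lg_ge2.
rewrite /enorm e1 e2.
rewrite -[Lg]ger0_norm // -sqrtr_sqr -sqrtrM ?sqr_ge0 // ler_sqrt ?mulr_ge0 ?sqr_ge0 ?dotv_ge0 //.
rewrite !dot_comb -(enorm2 x) -(enorm2 y).
apply: key_ineq; rewrite ?enorm_ge0 ?kf_bound ?CS //.
by rewrite !kf_rho rho_lip.
Qed.

Lemma S_lip1 (s1 s2 : R) : `|S s1 - S s2| <= 1 * `|s1 - s2|.
Proof. apply: (@lip_of_deriv R S d1) => [t|t]; [exact: der_S|exact: d1_bound]. Qed.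

Lemma SS_ge (s1 s2 : R) : (s1 + a) * (s2 + a) + b <= S s1 * S s2.
Proof.
rewrite /S -sqrtrM; last exact/ltW/q_gt0.
apply: le_trans (ler_norm _) _; rewrite -sqrtr_sqr ler_sqrt; last first.
  by rewrite mulr_ge0 // ltW // q_gt0.
rewrite -subr_ge0 (_ : _ - _ = b * (s1 - s2) ^+ 2); last by rewrite /q; ring.
by rewrite mulr_ge0 ?sqr_ge0 // ltW.
Qed.

Lemma S_convex (s1 s2 t : R) : 0 <= t <= 1 ->
  S (t * s1 + (1 - t) * s2) <= t * S s1 + (1 - t) * S s2.
Proof.
move=> /andP[t0 t1].
have h1 := S_gt0 s1; have h2 := S_gt0 s2.
have hr : 0 <= t * S s1 + (1 - t) * S s2.
  by rewrite addr_ge0 // mulr_ge0 // ?subr_ge0 // ltW.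
rewrite -[X in _ <= X]ger0_norm // -sqrtr_sqr /S ler_sqrt ?sqr_ge0 // -subr_ge0.
have E : (t * Num.sqrt (q s1) + (1 - t) * Num.sqrt (q s2)) ^+ 2 - q (t * s1 + (1 - t) * s2)
  = t ^+ 2 * (S s1 ^+ 2 - q s1) + (1 - t) ^+ 2 * (S s2 ^+ 2 - q s2) +
    2 * (t * (1 - t) * (S s1 * S s2 - ((s1 + a) * (s2 + a) + b))).
  by rewrite /S /q; ring.
rewrite E !SS !subrr !mulr0 !add0r mulr_ge0 // mulr_ge0 ?mulr_ge0 ?subr_ge0 //.
exact: SS_ge.
Qed.

Lemma T_mono (s1 s2 : R) : s1 <= s2 -> S s1 + Lg / 2 * s1 <= S s2 + Lg / 2 * s2.
Proof.
move=> h; have hs : 0 <= s2 - s1 by rewrite subr_ge0.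
have := S_lip1 s2 s1; rewrite mul1r (ger0_norm hs) => hl.
have hn := ler_norm (- (S s2 - S s1)); rewrite normrN in hn.
have h3 : s2 - s1 <= Lg / 2 * (s2 - s1).
  rewrite ler_peMl //; have := Lg_ge2; lra.
rewrite mulrBr in h3; lra.
Qed.

Lemma F_convex : convexf (fun x : V => P3 a b x + Lg / 2 * enorm x ^+ 2).
Proof.
move=> x y t ht; have /andP[t0 t1] := ht.
rewrite P3E /= !enorm2 /sqf.
set z := t *: x + (1 - t) *: y.
have hz : dotv z z <= t * dotv x x + (1 - t) * dotv y y.
  have hd := dotv_ge0 (1 *: x + (-1) *: y); rewrite dot_comb in hd.
  rewrite /z dot_comb -subr_ge0.
  set d := (X in 0 <= X) in hd.
  have -> : t * dotv x x + (1 - t) * dotv y y -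
     (t * t * dotv x x + (t * (1 - t) + (1 - t) * t) * dotv x y + (1 - t) * (1 - t) * dotv y y)
     = t * (1 - t) * d by rewrite /d; ring.
  by rewrite mulr_ge0 // mulr_ge0 // subr_ge0.
apply: le_trans (T_mono _ _ hz) _.
apply: le_trans (lerD (S_convex (dotv x x) (dotv y y) t ht) (lexx _)) _.
by rewrite -subr_ge0 (_ : _ - _ = 0) ?lexx //; ring.
Qed.

Lemma hess_sub (x y : V) i j : hessian (P3 a b (m:=m)) x i j - hessian (P3 a b (m:=m)) y i j =
  (kf x - kf y) * (i == j)%:R + 4 * (d2 (sqf x) * (x 0 i * x 0 j) - d2 (sqf y) * (y 0 i * y 0 j)).
Proof.
apply: eq_trans (f_equal2 (fun u v => u - v) (hess_E x i j) (hess_E y i j)) _.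
by rewrite /=; ring.
Qed.


Lemma fnorm_bound (A B : 'M[R]_m) (K d : R) : 0 <= K -> 0 <= d ->
  (forall i j, `|A i j - B i j| <= K * d) -> fnorm (A - B) <= m%:R * K * d.
Proof.
move=> hK hd h; rewrite /fnorm.
have hR : 0 <= m%:R * K * d by rewrite !mulr_ge0.

rewrite -[X in _ <= X]ger0_norm //.  rewrite -sqrtr_sqr.  rewrite ler_sqrt ?sqr_ge0 //. 
apply: (le_trans (y := \sum_(i < m) \sum_(j < m) (K * d) ^+ 2)).
  
  apply: ler_sum => i _; apply: ler_sum => j _.
  
  rewrite (_ : (A - B) i j = A i j - B i j); last by rewrite !mxE.
  
  have hKd : 0 <= K * d by apply: mulr_ge0.
  rewrite -sqnorm; apply: lerXn2r; first by rewrite nnegrE normr_ge0.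
    by rewrite nnegrE.
  exact: h.

have hc : forall c : R, \sum_(i < m) c = c * m%:R by move=> c; rewrite sumr_const card_ord mulr_natr.
rewrite hc hc le_eqVlt; apply/orP; left; apply/eqP; ring.
Qed.

Lemma prod_diff (p1 p2 q1 q2 Bp Bq Lp Lq d : R) :
  `|p1| <= Bp -> `|q2| <= Bq -> `|p1 - p2| <= Lp * d -> `|q1 - q2| <= Lq * d ->
  `|p1 * q1 - p2 * q2| <= (Bp * Lq + Bq * Lp) * d.
Proof.
move=> h1 h2 h3 h4.
have -> : p1 * q1 - p2 * q2 = p1 * (q1 - q2) + q2 * (p1 - p2) by ring.
apply: (le_trans (ler_normD _ _)); rewrite !normrM mulrDl -!mulrA.
by apply: lerD; apply: ler_pM.
Qed.

Lemma sqf_diff_bound (x y : V) (M : R) : enorm x <= M -> enorm y <= M ->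
  `|sqf x - sqf y| <= (2 * M) * enorm (x - y).
Proof.
move=> hx hy.
have e : sqf x - sqf y = dotv (x - y) (x + y).
  have -> : x - y = 1 *: x + (-1) *: y by rewrite scale1r scaleN1r.
  have -> : x + y = 1 *: x + 1 *: y by rewrite !scale1r.
  by rewrite dot_comb /sqf; ring.
rewrite e; apply: (le_trans (CS _ _)); rewrite mulrC ler_wpM2r ?enorm_ge0 //.
by apply: (le_trans (enorm_tri _ _)); lra.
Qed.

Lemma coord_diff (x y : V) i : `|x 0 i - y 0 i| <= 1 * enorm (x - y).
Proof. by rewrite mul1r (le_trans _ (coord_le (x - y) i)) // !mxE. Qed.

Lemma hess_lip : hessian_locally_lipschitz (P3 a b (m:=m)).
Proof.
move=> x0; set M := enorm x0 + 1.
have hM : 0 <= M by rewrite /M addr_ge0 ?enorm_ge0.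
have hc1 : 0 <= c1 by rewrite /c1 invr_ge0 ltW // beta_gt0.
set K0 := 2 * c1 * (2 * M) + 4 * (c1 * (M * 1 + M * 1) + M * M * (3 / b * (2 * M))).
exists 1, (m%:R * K0); split => // x y hx hy.
have bnd : forall z : V, enorm (z - x0) < 1 -> enorm z <= M.
  move=> z hz; have -> : z = (z - x0) + x0 by rewrite subrK.
  by apply: (le_trans (enorm_tri _ _)); rewrite /M; lra.
have bx := bnd x hx; have by' := bnd y hy.
set d := enorm (x - y).
have hd : 0 <= d by exact: enorm_ge0.
have cx : forall i, `|x 0 i| <= M by move=> i; exact: le_trans (coord_le x i) bx.
have cy : forall i, `|y 0 i| <= M by move=> i; exact: le_trans (coord_le y i) by'.
have hs := sqf_diff_bound _ _ _ bx by'.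
have hk : `|kf x - kf y| <= 2 * c1 * (2 * M) * d.
  have -> : kf x - kf y = 2 * (d1 (sqf x) - d1 (sqf y)) by rewrite /kf; ring.
  rewrite normrM ger0_norm // -!mulrA ler_wpM2l //.
  apply: (le_trans (d1_lip _ _)); apply: ler_wpM2l => //.
  by rewrite mulrA.
have hq : forall i j, `|x 0 i * x 0 j - y 0 i * y 0 j| <= (M * 1 + M * 1) * d.
  by move=> i j; apply: prod_diff; rewrite ?cx ?cy ?coord_diff.
have hp : `|d2 (sqf x) - d2 (sqf y)| <= 3 / b * (2 * M) * d.
  apply: (le_trans (d2_lip _ _)); rewrite -(mulrA (3 / b)); apply: ler_wpM2l => //.
  by rewrite divr_ge0 // ltW.
have hK0 : 0 <= K0.
  rewrite /K0; apply: addr_ge0; first by rewrite !mulr_ge0.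
  apply: mulr_ge0 => //; apply: addr_ge0; first by rewrite !mulr_ge0 // addr_ge0 // mulr1.
  by rewrite !mulr_ge0 // ?invr_ge0 // ltW.
apply: fnorm_bound => // i j.
rewrite hess_sub.
apply: (le_trans (ler_normD _ _)); rewrite /K0 [X in _ <= X]mulrDl; apply: lerD.
  have hdl : `|(i == j)%:R : R| <= 1 by case: (i == j); rewrite ?normr1 ?normr0.
  rewrite normrM; apply: (le_trans (y := `|kf x - kf y| * 1)).
    by apply: ler_wpM2l => //; exact: normr_ge0.
  by rewrite mulr1.
rewrite normrM (ger0_norm (_ : 0 <= 4)) // -(mulrA 4); apply: ler_wpM2l => //.
apply: (@prod_diff _ _ _ _ c1 (M * M) (3 / b * (2 * M)) (M * 1 + M * 1) d).
- by rewrite ger0_norm ?d2_ge0 // d2_bound.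
- by rewrite normrM; apply: ler_pM.
- exact: hp.
- exact: hq.
Qed.
End OneD.

Theorem lemma10 (R : realType) (a b : R) (hb : 0 < b) :
  (forall m : nat, twice_differentiable (P3 a b (m:=m)) /\
                   hessian_locally_lipschitz (P3 a b (m:=m))) /\
  exists L : R, forall m : nat, curvature_bounded L (P3 a b (m:=m)).
Proof.
split.
  move=> m; split; last exact: (@hess_lip R a b hb m).
  split => x.
    by case: (@P3_diff R a b hb m x).
  rewrite (@grad_P3 R a b hb m).
  by case: (@G_diff R a b hb m x).
exists (Lg R a b) => m; split; first exact: (@F_convex R a b hb m).
split.
  by move=> x; case: (@P3_diff R a b hb m x).
rewrite (@grad_P3 R a b hb m) => x y.
exact: (@G_lip R a b hb m).
Qed.
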